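(* Let $G$ be a simple graph with $m$ edges and girth $g(G)\ge 5$. Then the number $p(G;4)$ of $4$-matchings of $G$ equals $$\frac{1}{24}m^4+\frac14 m^3+\frac{19}{24}m^2-\frac{11}{4}m+\frac18 M_1(G)^2+\frac13 mF(G)-\frac14 m^2M_1(G)+mM_2(G)+\frac14 M_1^4(G)-2M_2(G)-\frac54 mM_1(G)+\frac72 M_1(G)-EM_2(G)-\frac32 F(G),$$ where $M_1(G)^2$ is the square of the number $M_1(G)$.
   Context: All graphs are finite, simple and undirected. A $k$-matching is a set of $k$ pairwise vertex-disjoint edges; $p(G;k)$ is the number of $k$-matchings in $G$. $d_G(v)$ is the degree of $v$; the girth is the length of a shortest cycle (infinite if acyclic). $M_1^\alpha(G)=\sum_v d_G(v)^\alpha$ (exponent on degrees), $M_1=M_1^2$, $F=M_1^3$, $M_1^4(G)=\sum_v d_G(v)^4$; $M_2(G)=\sum_{uv\in E(G)}d_G(u)d_G(v)$. For an edge $e=uv$, $d_G(e)=d_G(u)+d_G(v)-2$; $EM_2(G)=\sum_{e\sim f}d_G(e)d_G(f)$, the sum over unordered pairs of distinct edges sharing a vertex. *)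

(* Defs.v *)
From mathcomp Require Import all_boot all_order all_algebra.
Set Implicit Arguments. Unset Strict Implicit. Unset Printing Implicit Defensive.
Import GRing.Theory Num.Theory.

(* A finite simple graph: vertex type T : finType, adjacency e : rel T,
   required to be symmetric and irreflexive (hypotheses of the theorem). *)

Section Graph.
Variables (T : finType) (e : rel T).

Definition edges : {set {set T}} :=
  [set A : {set T} | [exists x, exists y, e x y && (A == [set x; y])]].

Definition nedges : nat := #|edges|.

Definition deg (v : T) : nat := #|[set u | e v u]|.

Definition matchings (k : nat) : {set {set {set T}}} :=
  [set M : {set {set T}} | (M \subset edges) && (#|M| == k) &&
     [forall A in M, forall B in M, (A != B) ==> [disjoint A & B]]].

Definition p_match (k : nat) : nat := #|matchings k|.

Definition has_cycle_of_length (k : nat) : Prop :=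
  (3 <= k) /\ exists s : seq T, [/\ size s = k, uniq s & cycle e s].

(* girth >= g : every cycle has length >= g (vacuous for acyclic graphs) *)
Definition girth_ge (g : nat) : Prop :=
  forall k, has_cycle_of_length k -> g <= k.

Local Open Scope ring_scope.

Definition M1pow (a : nat) : rat := \sum_(v : T) ((deg v)%:R ^+ a).
Definition M1 : rat := M1pow 2.
Definition Fidx : rat := M1pow 3.
Definition M14 : rat := M1pow 4.

Definition M2 : rat := \sum_(A in edges) \prod_(v in A) (deg v)%:R.

Definition edeg (A : {set T}) : rat := (\sum_(v in A) (deg v)%:R) - 2.

Definition EM2 : rat :=
  \sum_(P : {set {set T}} | (P \subset edges) && (#|P| == 2%N) &&
                            (\bigcap_(A in P) A != set0))
     \prod_(A in P) edeg A.

End Graph.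

(* Main.v *)
Require Import Defs.
From mathcomp Require Import all_boot all_order all_algebra.
From mathcomp Require Import ring.
Import GRing.Theory Num.Theory.
Set Implicit Arguments. Unset Strict Implicit. Unset Printing Implicit Defensive.
Local Open Scope ring_scope.

Section Basic.
Variables (T : finType) (e : rel T).
Hypothesis e_sym : symmetric e.
Hypothesis e_irr : irreflexive e.

Local Notation E := (edges e).
Definition Nb (w : T) : {set T} := [set u | e w u].
Definition dg (w : T) : rat := (deg e w)%:R.
Lemma dgE w : dg w = #|Nb w|%:R. Proof. by []. Qed.

Lemma inNb w a : (a \in Nb w) = e w a. Proof. by rewrite inE. Qed.

Lemma edgeP (A : {set T}) : reflect (exists x y, e x y /\ A = [set x; y]) (A \in E).
Proof.
rewrite inE; apply: (iffP existsP) => [[x /existsP [y /andP [exy /eqP ->]]]|[x [y [exy ->]]]].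
  by exists x, y.
by exists x; apply/existsP; exists y; rewrite exy eqxx.
Qed.

Lemma e_neq x y : e x y -> x != y.
Proof. by move=> exy; apply/eqP => Exy; move: exy; rewrite Exy e_irr. Qed.

Lemma edge_in x y : e x y -> [set x; y] \in E.
Proof. by move=> exy; apply/edgeP; exists x, y. Qed.

Lemma cardE (A : {set T}) : A \in E -> #|A| = 2%N.
Proof. by case/edgeP => x [y [exy ->]]; rewrite cards2 e_neq. Qed.

Lemma edge_eq2 (C : {set T}) u v : C \in E -> u \in C -> v \in C -> u != v -> C = [set u; v].
Proof.
move=> CE uC vC uv; apply/esym/eqP; rewrite eqEcard cardE // cards2 uv leqnn andbT.
by apply/subsetP => z; rewrite !inE => /orP [] /eqP ->.
Qed.

Lemma edge_two (C : {set T}) u v : C \in E -> u \in C -> v \in C -> u != v -> e u v.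
Proof.
move=> CE uC vC uv; move: (edge_eq2 CE uC vC uv) => CE'.
case/edgeP: CE => x [y [exy Cxy]].
have: [set u; v] = [set x; y] by rewrite -CE' -Cxy.
move=> H.
have ux : (u == x) || (u == y) by rewrite -in_set2 -H set21.
have vx : (v == x) || (v == y) by rewrite -in_set2 -H set22.
case/orP: ux => /eqP ux; case/orP: vx => /eqP vx; subst.
- by rewrite eqxx in uv.
- by [].
- by rewrite e_sym.
- by rewrite eqxx in uv.
Qed.

Lemma edge_meet (A : {set T}) : A \in E -> ~~ [disjoint A & A].
Proof.
move=> AE; rewrite -setI_eq0 setIid -card_gt0 cardE //.
Qed.

Lemma meet2 (C : {set T}) x y : ~~ [disjoint C & [set x; y]] = (x \in C) || (y \in C).
Proof.
rewrite -setI_eq0; apply/set0Pn/idP => [[z]|].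
  by rewrite !inE => /andP [zC /orP [] /eqP <-]; rewrite zC ?orbT.
by case/orP => H; [exists x | exists y]; rewrite !inE H eqxx ?orbT.
Qed.

Lemma inter_card (A B : {set T}) : A \in E -> B \in E ->
  #|A :&: B| = ((~~ [disjoint A & B]) + (A == B))%N.
Proof.
move=> AE BE; have [<-|AB] := eqVneq A B.
  by rewrite setIid edge_meet // cardE.
rewrite addn0 -setI_eq0 -cards_eq0.
have : (#|A :&: B| <= 1)%N.
  rewrite leqNgt; apply/negP => /card_gt1P [u [v [uAB vAB uv]]].
  move: uAB vAB; rewrite !inE => /andP [uA uB] /andP [vA vB].
  by move: AB; rewrite (edge_eq2 AE uA vA uv) (edge_eq2 BE uB vB uv) eqxx.
by case: #|_| => [|[|]].
Qed.


Definition Dj (A B : {set T}) : rat := ([disjoint A & B])%:R.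
Definition Mt (A B : {set T}) : rat := (~~ [disjoint A & B])%:R.

Lemma DjC A B : Dj A B = Dj B A. Proof. by rewrite /Dj disjoint_sym. Qed.
Lemma MtC A B : Mt A B = Mt B A. Proof. by rewrite /Mt disjoint_sym. Qed.
Lemma MtE A B : Mt A B = (~~ [disjoint A & B])%:R.
Proof. by []. Qed.
Lemma DjM A B : Dj A B = 1 - Mt A B.
Proof. by rewrite /Mt /Dj; case: [disjoint _ & _]; rewrite ?subrr ?subr0. Qed.
Lemma Mt2 A B : Mt A B * Mt A B = Mt A B.
Proof. by rewrite MtE; case: [disjoint _ & _]; rewrite ?mulr0 ?mulr1. Qed.
Lemma MtAA A : A \in E -> Mt A A = 1.
Proof. by move=> AE; rewrite MtE edge_meet. Qed.

Lemma sum_ind (S : {set T}) : \sum_i ((i \in S)%:R : rat) = #|S|%:R.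
Proof. by rewrite -sum1_card natr_sum [RHS]big_mkcond /=; apply: eq_bigr => i _; case: (i \in S). Qed.

Lemma star w (F : {set T} -> rat) :
  \sum_(A in E | w \in A) F A = \sum_(a in Nb w) F [set w; a].
Proof.
rewrite -(big_imset _ (h := fun a => [set w; a])) /=; last first.
  move=> a b; rewrite !inNb => ewa ewb Hab.
  have : a \in [set w; b] by rewrite -Hab set22.
  by rewrite in_set2 => /orP [/eqP aw|/eqP //]; move: ewa; rewrite aw e_irr.
apply: eq_bigl => A; apply/andP/imsetP => [[AE wA]|[a]].
  case/edgeP: AE wA => x [y [exy ->]]; rewrite in_set2 => /orP [] /eqP wx.
    by exists y; rewrite ?inNb wx.
  by exists x; rewrite ?inNb wx 1?e_sym // setUC.
by rewrite inNb => ewa ->; rewrite edge_in // set21.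
Qed.

Lemma star_card w : \sum_(A in E | w \in A) (1 : rat) = dg w.
Proof. by rewrite star sumr_const dgE. Qed.

Lemma edge_sum (F : {set T} -> rat) :
  \sum_(A in E) F A = (\sum_w \sum_(a in Nb w) F [set w; a]) / 2%:R.
Proof.
have -> : \sum_w \sum_(a in Nb w) F [set w; a]
        = \sum_w \sum_(A in E) (w \in A)%:R * F A.
  apply: eq_bigr => w _; rewrite -star big_mkcondr /=.
  by apply: eq_bigr => A _; case: (w \in A); rewrite ?mul1r ?mul0r.
rewrite exchange_big /=.
have -> : \sum_(j in E) \sum_i (i \in j)%:R * F j = \sum_(j in E) 2%:R * F j.
  by apply: eq_bigr => A AE; rewrite -mulr_suml sum_ind cardE.
by rewrite -mulr_sumr mulrC mulrA mulVf ?mul1r.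
Qed.

Lemma Mt_sum A (G : {set T} -> rat) : A \in E ->
  \sum_(B in E) Mt A B * G B
  = \sum_(w in A) \sum_(b in Nb w) G [set w; b] - G A.
Proof.
move=> AE.
have H : forall B, B \in E ->
   Mt A B = \sum_(w in A) (w \in B)%:R - (A == B)%:R.
  move=> B BE; apply/eqP; rewrite eq_sym subr_eq MtE -natrD -inter_card //.
  rewrite -sum1_card natr_sum (eq_bigl (fun w => (w \in A) && (w \in B))) => [|w]; last by rewrite inE.
  by rewrite big_mkcondr /=; apply/eqP; apply: eq_bigr => w _; case: (w \in B).
rewrite (eq_bigr (fun B : {set T} => \sum_(w in A) (w \in B)%:R * G B - (A == B)%:R * G B)); last first.
  by move=> B BE; rewrite H // mulrBl mulr_suml.
rewrite sumrB exchange_big /=; congr (_ - _).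
  apply: eq_bigr => w wA; rewrite -star big_mkcondr /=.
  by apply: eq_bigr => B _; case: (w \in B); rewrite ?mul1r ?mul0r.
rewrite (bigD1 A) //= eqxx mul1r big1 ?addr0 // => B /andP [_ BA].
by rewrite eq_sym (negbTE BA) mul0r.
Qed.

Definition nn (A : {set T}) : rat := \sum_(B in E) Mt A B.
Definition cc (A B : {set T}) : rat := \sum_(C in E) Mt C A * Mt C B.

Lemma nnE A : A \in E -> nn A = \sum_(w in A) dg w - 1.
Proof.
move=> AE; rewrite /nn (eq_bigr (fun B => Mt A B * 1)) => [|B _]; last by rewrite mulr1.
rewrite Mt_sum //; congr (_ - _); apply: eq_bigr => w _.
by rewrite sumr_const dgE.
Qed.

Lemma sum2 w a (f : T -> rat) : w != a -> \sum_(v in [set w; a]) f v = f w + f a.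
Proof. by move=> wa; rewrite big_setU1 ?big_set1 // inE. Qed.

Lemma nn2 w a : e w a -> nn [set w; a] = dg w + dg a - 1.
Proof. by move=> ewa; rewrite nnE ?edge_in // sum2 // e_neq. Qed.

Lemma ccC A B : cc A B = cc B A.
Proof. by apply: eq_bigr => C _; rewrite mulrC. Qed.

Lemma cc_diag A : cc A A = nn A.
Proof. by apply: eq_bigr => C _; rewrite Mt2 MtC. Qed.

Lemma pick_meet (C A : {set T}) : ~~ [disjoint C & A] -> exists2 x, x \in C & x \in A.
Proof. by rewrite -setI_eq0 => /set0Pn [x]; rewrite inE => /andP [] ? ?; exists x. Qed.

Lemma disj_neq (A B : {set T}) x y : [disjoint A & B] -> x \in A -> y \in B -> x != y.
Proof.
move=> dAB xA yB; apply/eqP => xy; move: dAB; rewrite -setI_eq0 => /eqP/setP/(_ x).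
by rewrite !inE xA xy yB.
Qed.

Hypothesis notri : forall x y z, e x y -> e y z -> e z x -> False.
Hypothesis noc4 : forall x y z t, e x y -> e y z -> e z t -> e t x -> x != z -> y != t -> False.

Lemma cc_star w a b : e w a -> e w b -> a != b -> cc [set w; a] [set w; b] = dg w.
Proof.
move=> ewa ewb ab; rewrite /cc -star_card big_mkcondr /=; apply: eq_bigr => C CE.
rewrite !MtE !meet2; case wC: (w \in C); rewrite ?mulr1 //=.
case aC: (a \in C); case bC: (b \in C); rewrite ?mulr0 ?mul0r //.
by case: (notri ewa (edge_two CE aC bC ab)); rewrite e_sym.
Qed.

Lemma cc_uniq (A B C1 C2 : {set T}) : A \in E -> B \in E -> [disjoint A & B] ->
  C1 \in E -> C2 \in E -> ~~ [disjoint C1 & A] -> ~~ [disjoint C1 & B] ->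
  ~~ [disjoint C2 & A] -> ~~ [disjoint C2 & B] -> C1 = C2.
Proof.
move=> AE BE dAB C1E C2E /pick_meet [x1 x1C x1A] /pick_meet [y1 y1C y1B]
  /pick_meet [x2 x2C x2A] /pick_meet [y2 y2C y2B].
have n1 := disj_neq dAB x1A y1B; have n2 := disj_neq dAB x2A y2B.
rewrite (edge_eq2 C1E x1C y1C n1) (edge_eq2 C2E x2C y2C n2).
have e1 := edge_two C1E x1C y1C n1; have e2 := edge_two C2E x2C y2C n2.
have [ex|nx] := eqVneq x1 x2; have [ey|ny] := eqVneq y1 y2.
- by rewrite ex ey.
- subst x2; case: (notri e1 (edge_two BE y1B y2B ny)); by rewrite e_sym.
- subst y2; case: (notri (edge_two AE x1A x2A nx) e2); by rewrite e_sym.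
- have e3 : e y2 x2 by rewrite e_sym.
  have e4 : e x2 x1 by rewrite e_sym (edge_two AE x1A x2A nx).
  have n3 : y1 != x2 by rewrite eq_sym (disj_neq dAB x2A y1B).
  by case: (noc4 e1 (edge_two BE y1B y2B ny) e3 e4 (disj_neq dAB x1A y2B) n3).
Qed.

Lemma cc01 A B : A \in E -> B \in E -> [disjoint A & B] -> cc A B * cc A B = cc A B.
Proof.
move=> AE BE dAB.
have -> : cc A B = #|[set C in E | ~~ [disjoint C & A] && ~~ [disjoint C & B]]|%:R.
  rewrite -sum1_card natr_sum /cc big_mkcond [RHS]big_mkcond /=; apply: eq_bigr => C _.
  rewrite !MtE; case CE: (C \in E); rewrite in_set CE /=;
    case: [disjoint C & A]; case: [disjoint C & B]; by rewrite ?mulr0 ?mul0r ?mulr1.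
set S := [set C in E | _].
have : (#|S| <= 1)%N.
  apply/card_le1_eqP => C1 C2; rewrite [C1 \in S]in_set [C2 \in S]in_set => /andP [C1E /andP [m1 m1']] /andP [C2E /andP [m2 m2']].
  exact: (@cc_uniq A B C2 C1 AE BE dAB C2E C1E m2 m2' m1 m1').
by case: #|S| => [|[|]] //; rewrite ?mulr0 ?mulr1.
Qed.

Lemma K3 (A1 A2 A3 C : {set T}) : [disjoint A1 & A2] -> [disjoint A1 & A3] ->
  [disjoint A2 & A3] -> C \in E -> Mt C A1 * Mt C A2 * Mt C A3 = 0.
Proof.
move=> d12 d13 d23 CE; rewrite !MtE.
case m1: [disjoint C & A1]; rewrite ?mul0r //.
case m2: [disjoint C & A2]; rewrite ?mulr0 ?mul0r //.
case m3: [disjoint C & A3]; rewrite ?mulr0 //.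
move/negbT: m1 => /pick_meet [z1 z1C z1A]; move/negbT: m2 => /pick_meet [z2 z2C z2A].
move/negbT: m3 => /pick_meet [z3 z3C z3A].
move: z3C; rewrite (edge_eq2 CE z1C z2C (disj_neq d12 z1A z2A)) in_set2.
case/orP => /eqP z3E; subst z3.
  by move: (disj_neq d13 z1A z3A); rewrite eqxx.
by move: (disj_neq d23 z2A z3A); rewrite eqxx.
Qed.

End Basic.

Section Alg.
Variables (T : finType) (e : rel T).
Hypothesis e_sym : symmetric e.
Hypothesis e_irr : irreflexive e.
Hypothesis notri : forall x y z, e x y -> e y z -> e z x -> False.
Hypothesis noc4 : forall x y z t, e x y -> e y z -> e z t -> e t x -> x != z -> y != t -> False.

Local Notation E := (edges e).
Local Notation nn := (nn e).
Local Notation cc := (cc e).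
Local Notation Mt := (@Mt T).
Local Notation Dj := (@Dj T).
Definition mE : rat := #|E|%:R.


Lemma sum_cst (k : rat) : \sum_(A in E) k = mE * k.
Proof. by rewrite sumr_const /mE mulr_natl. Qed.

Lemma R_sum A B : \sum_(C in E) Dj A C * Dj B C = mE - nn A - nn B + cc A B.
Proof.
rewrite (eq_bigr (fun C => 1 - Mt A C - Mt B C + Mt C A * Mt C B)); last first.
  by move=> C _; rewrite !DjM (MtC C A) (MtC C B); ring.
by rewrite big_split !sumrB /= sum_cst mulr1.
Qed.

Lemma T_inner A1 A2 A3 :
  \sum_(C in E) Dj A1 C * Dj A2 C * Dj A3 C =
  mE - nn A1 - nn A2 - nn A3 + cc A1 A2 + cc A1 A3 + cc A2 A3
  - \sum_(C in E) Mt C A1 * Mt C A2 * Mt C A3.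
Proof.
rewrite (eq_bigr (fun C => 1 - Mt A1 C - Mt A2 C - Mt A3 C + Mt C A1 * Mt C A2
   + Mt C A1 * Mt C A3 + Mt C A2 * Mt C A3 - Mt C A1 * Mt C A2 * Mt C A3)); last first.
  by move=> C _; rewrite !DjM (MtC C A1) (MtC C A2) (MtC C A3); ring.
by rewrite !(sumrB, big_split) /= sum_cst mulr1.
Qed.

Lemma inner_kill A1 A2 A3 :
  Dj A1 A2 * Dj A1 A3 * Dj A2 A3 * \sum_(C in E) Mt C A1 * Mt C A2 * Mt C A3 = 0.
Proof.
rewrite /Dj; case d12: [disjoint A1 & A2]; rewrite ?mul0r ?mulr0 //.
case d13: [disjoint A1 & A3]; rewrite ?mul0r ?mulr0 //.
case d23: [disjoint A2 & A3]; rewrite ?mul0r ?mulr0 //.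
by rewrite big1 ?mulr0 // => C CE; apply: K3.
Qed.

Definition S3 (F : {set T} -> {set T} -> {set T} -> rat) : rat :=
  \sum_(A in E) \sum_(B in E) \sum_(C in E) Dj A B * Dj A C * Dj B C * F A B C.

Definition X4 : rat :=
  \sum_(A1 in E) \sum_(A2 in E) \sum_(A3 in E) \sum_(A4 in E)
    Dj A1 A2 * Dj A1 A3 * Dj A1 A4 * Dj A2 A3 * Dj A2 A4 * Dj A3 A4.

Lemma X4_S3 : X4 = S3 (fun A B C => mE - nn A - nn B - nn C + cc A B + cc A C + cc B C).
Proof.
apply: eq_bigr => A _; apply: eq_bigr => B _; apply: eq_bigr => C _.
rewrite (eq_bigr (fun D => Dj A B * Dj A C * Dj B C * (Dj A D * Dj B D * Dj C D))); last first.
  by move=> D _; ring.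
rewrite -mulr_sumr T_inner mulrBr inner_kill subr0 //.
Qed.

Lemma S3_add F G : S3 (fun A B C => F A B C + G A B C) = S3 F + S3 G.
Proof.
rewrite /S3 -big_split; apply: eq_bigr => A _; rewrite -big_split; apply: eq_bigr => B _.
by rewrite -big_split; apply: eq_bigr => C _ /=; ring.
Qed.
Lemma S3_opp F : S3 (fun A B C => - F A B C) = - S3 F.
Proof.
rewrite /S3 -sumrN; apply: eq_bigr => A _; rewrite -sumrN; apply: eq_bigr => B _.
by rewrite -sumrN; apply: eq_bigr => C _ /=; ring.
Qed.
Lemma S3_scale k F : S3 (fun A B C => k * F A B C) = k * S3 F.
Proof.
rewrite /S3 mulr_sumr; apply: eq_bigr => A _; rewrite mulr_sumr; apply: eq_bigr => B _.
by rewrite mulr_sumr; apply: eq_bigr => C _ /=; ring.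
Qed.
Lemma S3_const k : S3 (fun _ _ _ => k) = k * S3 (fun _ _ _ => 1).
Proof.
rewrite /S3 mulr_sumr; apply: eq_bigr => A _; rewrite mulr_sumr; apply: eq_bigr => B _.
by rewrite mulr_sumr; apply: eq_bigr => C _ /=; ring.
Qed.
Lemma S3_12 F : S3 F = S3 (fun A B C => F B A C).
Proof.
rewrite /S3 exchange_big; apply: eq_bigr => A _; apply: eq_bigr => B _.
by apply: eq_bigr => C _; rewrite (DjC B A); ring.
Qed.
Lemma S3_23 F : S3 F = S3 (fun A B C => F A C B).
Proof.
rewrite /S3; apply: eq_bigr => A _; rewrite exchange_big; apply: eq_bigr => B _.
by apply: eq_bigr => C _; rewrite (DjC C B); ring.
Qed.

Lemma S3_lin :
  S3 (fun A B C => mE - nn A - nn B - nn C + cc A B + cc A C + cc B C)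
  = mE * S3 (fun _ _ _ => 1) - 3%:R * S3 (fun A _ _ => nn A) + 3%:R * S3 (fun A B _ => cc A B).
Proof.
rewrite !(S3_add, S3_opp).
rewrite S3_const.
rewrite [S3 (fun A B C => nn B)]S3_12 [S3 (fun A B C => nn C)]S3_23 [S3 (fun A B C => nn B)]S3_12.
rewrite [S3 (fun A B C => cc A C)]S3_23 [S3 (fun A B C => cc B C)]S3_12 [S3 (fun A B C => cc A C)]S3_23.
ring.
Qed.

End Alg.

Section Alg2.
Variables (T : finType) (e : rel T).
Hypothesis e_sym : symmetric e.
Hypothesis e_irr : irreflexive e.
Hypothesis notri : forall x y z, e x y -> e y z -> e z x -> False.
Hypothesis noc4 : forall x y z t, e x y -> e y z -> e z t -> e t x -> x != z -> y != t -> False.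

Local Notation E := (edges e).
Local Notation nn := (nn e).
Local Notation cc := (cc e).
Local Notation Mt := (@Mt T).
Local Notation Dj := (@Dj T).
Local Notation mE := (mE e).
Local Notation S3 := (S3 e).

Definition Q (G : {set T} -> {set T} -> rat) : rat :=
  \sum_(A in E) \sum_(B in E) Dj A B * G A B.

Lemma S3_2 G : S3 (fun A B _ => G A B) = Q (fun A B => G A B * (mE - nn A - nn B + cc A B)).
Proof.
apply: eq_bigr => A _; apply: eq_bigr => B _.
rewrite (eq_bigr (fun C => Dj A B * G A B * (Dj A C * Dj B C))); last by move=> C _; ring.
by rewrite -mulr_sumr R_sum; ring.
Qed.

Lemma Q_eq G H : (forall A B, A \in E -> B \in E -> [disjoint A & B] -> G A B = H A B) -> Q G = Q H.
Proof.
move=> GH; apply: eq_bigr => A AE; apply: eq_bigr => B BE; rewrite /Dj.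
by case dAB: [disjoint A & B]; rewrite ?mul0r // GH.
Qed.
Lemma Q_add F G : Q (fun A B => F A B + G A B) = Q F + Q G.
Proof.
rewrite /Q -big_split; apply: eq_bigr => A _; rewrite -big_split; apply: eq_bigr => B _ /=; ring.
Qed.
Lemma Q_opp F : Q (fun A B => - F A B) = - Q F.
Proof.
rewrite /Q -sumrN; apply: eq_bigr => A _; rewrite -sumrN; apply: eq_bigr => B _ /=; ring.
Qed.
Lemma Q_scale k F : Q (fun A B => k * F A B) = k * Q F.
Proof.
rewrite /Q mulr_sumr; apply: eq_bigr => A _; rewrite mulr_sumr; apply: eq_bigr => B _ /=; ring.
Qed.
Lemma Q_const k : Q (fun _ _ => k) = k * Q (fun _ _ => 1).
Proof.
rewrite /Q mulr_sumr; apply: eq_bigr => A _; rewrite mulr_sumr; apply: eq_bigr => B _ /=; ring.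
Qed.
Lemma Q_sym F : Q F = Q (fun A B => F B A).
Proof.
rewrite /Q exchange_big; apply: eq_bigr => A _; apply: eq_bigr => B _ /=.
by rewrite DjC.
Qed.

Definition Q1 := Q (fun _ _ => 1).
Definition QnA := Q (fun A _ => nn A).
Definition QnA2 := Q (fun A _ => nn A * nn A).
Definition QnAnB := Q (fun A B => nn A * nn B).
Definition Qc := Q (fun A B => cc A B).
Definition QcnA := Q (fun A B => cc A B * nn A).

Lemma X4_Q : X4 e = mE * (mE * Q1 - 2%:R * QnA + Qc)
   - 3%:R * (mE * QnA - QnA2 - QnAnB + QcnA) + 3%:R * ((mE + 1) * Qc - 2%:R * QcnA).
Proof.
rewrite (X4_S3 e_irr) S3_lin.
rewrite (S3_2 (fun _ _ => 1)) (S3_2 (fun A _ => nn A)) (S3_2 (fun A B => cc A B)).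
have -> : Q (fun A B => 1 * (mE - nn A - nn B + cc A B)) = mE * Q1 - 2%:R * QnA + Qc.
  rewrite (@Q_eq _ (fun A B => mE + (- nn A + (- nn B + cc A B)))); last by move=> *; ring.
  rewrite !(Q_add, Q_opp) Q_const [Q (fun A B => nn B)]Q_sym /Q1 /QnA /Qc; ring.
have -> : Q (fun A B => nn A * (mE - nn A - nn B + cc A B)) = mE * QnA - QnA2 - QnAnB + QcnA.
  rewrite (@Q_eq _ (fun A B => mE * nn A + (- (nn A * nn A) + (- (nn A * nn B) + cc A B * nn A)))); last by move=> *; ring.
  rewrite !(Q_add, Q_opp) Q_scale /QnA /QnA2 /QnAnB /QcnA; ring.
have -> : Q (fun A B => cc A B * (mE - nn A - nn B + cc A B)) = (mE + 1) * Qc - 2%:R * QcnA.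
  rewrite (@Q_eq _ (fun A B => (mE + 1) * cc A B + (- (cc A B * nn A) + - (cc B A * nn B)))); last first.
    move=> A B AE BE dAB; rewrite (ccC e B A).
    have H := cc01 e_sym e_irr notri noc4 AE BE dAB.
    rewrite mulrDr H; ring.
  rewrite !(Q_add, Q_opp) Q_scale [Q (fun A B => cc B A * nn B)]Q_sym /Qc /QcnA; ring.
ring.
Qed.

Lemma Q_M G : Q G = \sum_(A in E) \sum_(B in E) G A B - \sum_(A in E) \sum_(B in E) Mt A B * G A B.
Proof.
rewrite -sumrB; apply: eq_bigr => A _; rewrite -sumrB; apply: eq_bigr => B _.
by rewrite DjM; ring.
Qed.

Lemma exch3 (F : {set T} -> {set T} -> {set T} -> rat) :
  \sum_(A in E) \sum_(B in E) \sum_(C in E) F A B C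
  = \sum_(C in E) \sum_(A in E) \sum_(B in E) F A B C.
Proof.
rewrite (eq_bigr (fun A => \sum_(C in E) \sum_(B in E) F A B C)); last by move=> A _; exact: exchange_big.
exact: exchange_big.
Qed.

Definition N1 := \sum_(A in E) nn A.
Definition N2 := \sum_(A in E) nn A * nn A.
Definition N3 := \sum_(A in E) nn A * nn A * nn A.
Definition SNS := \sum_(A in E) \sum_(B in E) Mt A B * (nn A * nn B).
Definition MC := \sum_(A in E) \sum_(B in E) Mt A B * cc A B.
Definition MCN := \sum_(A in E) \sum_(B in E) Mt A B * (cc A B * nn A).

Lemma Mt_nn A (f : rat) : \sum_(B in E) Mt A B * f = nn A * f.
Proof. by rewrite -mulr_suml. Qed.

Lemma Q1E : Q1 = mE * mE - N1.
Proof.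
rewrite /Q1 Q_M; congr (_ - _).
  by rewrite (eq_bigr (fun _ => mE)) ?sum_cst // => A _; rewrite ?sum_cst mulr1.
by apply: eq_bigr => A _; rewrite Mt_nn mulr1.
Qed.

Lemma QnAE : QnA = mE * N1 - N2.
Proof.
rewrite /QnA Q_M; congr (_ - _).
  by rewrite /N1 mulr_sumr; apply: eq_bigr => A _; rewrite sum_cst.
by apply: eq_bigr => A _; rewrite Mt_nn.
Qed.

Lemma QnA2E : QnA2 = mE * N2 - N3.
Proof.
rewrite /QnA2 Q_M; congr (_ - _).
  by rewrite /N2 mulr_sumr; apply: eq_bigr => A _; rewrite sum_cst.
by apply: eq_bigr => A _; rewrite Mt_nn mulrA.
Qed.

Lemma QnAnBE : QnAnB = N1 * N1 - SNS.
Proof.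
rewrite /QnAnB Q_M; congr (_ - _).
by rewrite /N1 mulr_suml; apply: eq_bigr => A _; rewrite mulr_sumr.
Qed.

Lemma QcE : Qc = N2 - MC.
Proof.
rewrite /Qc Q_M; congr (_ - _).
rewrite /cc exch3 /N2; apply: eq_bigr => C _.
by rewrite /nn mulr_suml; apply: eq_bigr => A _; rewrite mulr_sumr.
Qed.

Lemma QcnAE : QcnA = SNS - MCN.
Proof.
rewrite /QcnA Q_M; congr (_ - _).
rewrite (eq_bigr (fun A => \sum_(B in E) \sum_(C in E) Mt C A * Mt C B * nn A)); last first.
  by move=> A _; apply: eq_bigr => B _; rewrite /cc mulr_suml.
rewrite exch3 /SNS; apply: eq_bigr => C _.
apply: eq_bigr => A _.
rewrite (eq_bigr (fun B => Mt C A * nn A * Mt C B)); last by move=> B _; ring.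
rewrite -mulr_sumr; change (\sum_(B in E) Mt C B) with (nn C); ring.
Qed.

Lemma X4_N : X4 e = mE * (mE * (mE * mE - N1) - 2%:R * (mE * N1 - N2) + (N2 - MC))
   - 3%:R * (mE * (mE * N1 - N2) - (mE * N2 - N3) - (N1 * N1 - SNS) + (SNS - MCN))
   + 3%:R * ((mE + 1) * (N2 - MC) - 2%:R * (SNS - MCN)).
Proof. by rewrite X4_Q Q1E QnAE QnA2E QnAnBE QcE QcnAE. Qed.

End Alg2.

Section Vert.
Variables (T : finType) (e : rel T).
Hypothesis e_sym : symmetric e.
Hypothesis e_irr : irreflexive e.
Hypothesis notri : forall x y z, e x y -> e y z -> e z x -> False.
Hypothesis noc4 : forall x y z t, e x y -> e y z -> e z t -> e t x -> x != z -> y != t -> False.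

Local Notation E := (edges e).
Local Notation nn := (nn e).
Local Notation cc := (cc e).
Local Notation Mt := (@Mt T).
Local Notation Dj := (@Dj T).
Local Notation mE := (mE e).
Local Notation dg := (dg e).
Local Notation Nb := (Nb e).

Lemma sum_in_edges (H : {set T} -> T -> rat) :
  \sum_(A in E) \sum_(w in A) H A w = \sum_w \sum_(a in Nb w) H [set w; a] w.
Proof.
rewrite (eq_bigr (fun A : {set T} => \sum_w (w \in A)%:R * H A w)); last first.
  move=> A _; rewrite [LHS]big_mkcond /=; apply: eq_bigr => w _.
  by case: (w \in A); rewrite ?mul1r ?mul0r.
rewrite exchange_big /=; apply: eq_bigr => w _.
rewrite -(star e_sym e_irr w (fun A => H A w)) big_mkcondr /=; apply: eq_bigr => A _.
by case: (w \in A); rewrite ?mul1r ?mul0r.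
Qed.

Lemma sum_meet (G : {set T} -> {set T} -> rat) :
  \sum_(A in E) \sum_(B in E) Mt A B * G A B
  = \sum_w \sum_(a in Nb w) \sum_(b in Nb w) G [set w; a] [set w; b] - \sum_(A in E) G A A.
Proof.
rewrite (eq_bigr (fun A : {set T} => \sum_(w in A) \sum_(b in Nb w) G A [set w; b] - G A A)); last first.
  by move=> A AE; rewrite (Mt_sum e_sym e_irr).
by rewrite sumrB sum_in_edges.
Qed.

Lemma edge_sum_nn (f : rat -> rat) :
  \sum_(A in E) f (nn A) = (\sum_w \sum_(a in Nb w) f (dg w + dg a - 1)) / 2%:R.
Proof.
rewrite (edge_sum e_sym e_irr); congr (_ / _); apply: eq_bigr => w _.
by apply: eq_bigr => a; rewrite inNb => ewa; rewrite (nn2 e_sym e_irr).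
Qed.

Lemma cc_wab w a b : a \in Nb w -> b \in Nb w ->
  cc [set w; a] [set w; b] = if a == b then dg w + dg a - 1 else dg w.
Proof.
rewrite !inNb => ewa ewb; case: eqP => [<-|/eqP ab].
  by rewrite cc_diag (nn2 e_sym e_irr).
exact: (cc_star e_sym e_irr notri).
Qed.

Lemma pair_if w a (X Y : rat) : a \in Nb w ->
  \sum_(b in Nb w) (if a == b then X else Y) = X + (dg w - 1) * Y.
Proof.
move=> aN.
rewrite (eq_bigr (fun b => Y + (a == b)%:R * (X - Y))) => [|b _]; last first.
  by case: (a == b); rewrite ?mul1r ?mul0r; ring.
rewrite big_split /= sumr_const -mulr_suml.
have -> : \sum_(b in Nb w) ((a == b)%:R : rat) = 1.
  rewrite (bigD1 a) //= eqxx big1 ?addr0 // => b /andP [_ ba].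
  by rewrite eq_sym (negbTE ba).
by rewrite dgE -mulr_natr; ring.
Qed.

Definition sj (j : nat) (w : T) : rat := \sum_(a in Nb w) dg a ^+ j.

Lemma inner_poly w (c0 c1 c2 c3 : rat) :
  \sum_(a in Nb w) (c0 + c1 * dg a + c2 * dg a ^+ 2 + c3 * dg a ^+ 3)
  = c0 * dg w + c1 * sj 1 w + c2 * sj 2 w + c3 * sj 3 w.
Proof.
rewrite !big_split /= sumr_const dgE -!mulr_sumr mulr_natr /sj.
by rewrite (eq_bigr (fun a => dg a)) // => a _; rewrite expr1.
Qed.

Lemma dart_swap (F : T -> T -> rat) :
  \sum_w \sum_(a in Nb w) F w a = \sum_w \sum_(a in Nb w) F a w.
Proof.
have H : forall G : T -> T -> rat, \sum_w \sum_(a in Nb w) G w a = \sum_w \sum_a (e w a)%:R * G w a.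
  move=> G; apply: eq_bigr => w _; rewrite big_mkcond /=; apply: eq_bigr => a _.
  by rewrite inNb; case: (e w a); rewrite ?mul1r ?mul0r.
rewrite !H [RHS]exchange_big /=; apply: eq_bigr => w _; apply: eq_bigr => a _.
by rewrite e_sym.
Qed.

Lemma sum_const_Nb w (k : rat) : \sum_(a in Nb w) k = k * dg w.
Proof. by rewrite sumr_const dgE mulr_natr. Qed.

Definition Ak (k : nat) : rat := \sum_w dg w ^+ k.
Definition B1 : rat := \sum_w dg w * sj 1 w.
Definition B2 : rat := \sum_w dg w ^+ 2 * sj 1 w.
Definition Xs : rat := \sum_w sj 1 w ^+ 2.

Lemma sj_sum j : \sum_w sj j w = Ak j.+1.
Proof.
rewrite /sj (dart_swap (fun _ a => dg a ^+ j)); apply: eq_bigr => w _.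
by rewrite sum_const_Nb exprSr.
Qed.

Lemma dsum : \sum_w dg w = 2%:R * mE.
Proof.
have := edge_sum e_sym e_irr (fun _ => (1 : rat)); rewrite sum_cst mulr1 => ->.
rewrite mulrC -mulrA mulVf ?mulr1 //; apply: eq_bigr => w _.
by rewrite sum_const_Nb mul1r.
Qed.

Lemma B2_swap : \sum_w dg w * sj 2 w = B2.
Proof.
rewrite /B2 /sj.
rewrite (eq_bigr (fun w => \sum_(a in Nb w) dg w * dg a ^+ 2)) => [|w _]; last by rewrite mulr_sumr.
rewrite (dart_swap (fun w a => dg w * dg a ^+ 2)); apply: eq_bigr => w _.
by rewrite mulr_sumr; apply: eq_bigr => a _; rewrite mulrC.
Qed.

Lemma sum_lin (a1 a2 a3 a4 b1 b2 c d1 d2 d3 f : rat) :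
  \sum_w (a1 * dg w + a2 * dg w ^+ 2 + a3 * dg w ^+ 3 + a4 * dg w ^+ 4
     + b1 * (dg w * sj 1 w) + b2 * (dg w ^+ 2 * sj 1 w) + c * sj 1 w ^+ 2
     + d1 * sj 1 w + d2 * sj 2 w + d3 * sj 3 w + f * (dg w * sj 2 w))
  = a1 * (2%:R * mE) + a2 * Ak 2 + a3 * Ak 3 + a4 * Ak 4 + b1 * B1 + b2 * B2 + c * Xs
    + d1 * Ak 2 + d2 * Ak 3 + d3 * Ak 4 + f * B2.
Proof.
rewrite !big_split /= -!mulr_sumr !sj_sum B2_swap dsum.
by [].
Qed.

End Vert.

Section Vert.
Variables (T : finType) (e : rel T).
Hypothesis e_sym : symmetric e.
Hypothesis e_irr : irreflexive e.
Hypothesis notri : forall x y z, e x y -> e y z -> e z x -> False.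
Hypothesis noc4 : forall x y z t, e x y -> e y z -> e z t -> e t x -> x != z -> y != t -> False.

Local Notation E := (edges e).
Local Notation nn := (nn e).
Local Notation cc := (cc e).
Local Notation Mt := (@Mt T).
Local Notation Dj := (@Dj T).
Local Notation mE := (mE e).
Local Notation dg := (dg e).
Local Notation Nb := (Nb e).


Local Notation sj := (sj e).
Local Notation Ak := (Ak e).
Local Notation B1 := (B1 e).
Local Notation B2 := (B2 e).
Local Notation Xs := (Xs e).

Lemma N1A : N1 e = ((-1) * (2%:R * mE) + 1 * Ak 2 + 0 * Ak 3 + 0 * Ak 4 + 0 * B1 + 0 * B2 + 0 * Xs + 1 * Ak 2 + 0 * Ak 3 + 0 * Ak 4 + 0 * B2) / 2%:R.
Proof.
rewrite /N1 (edge_sum_nn e_sym e_irr (fun t => t)) -(sum_lin e_sym e_irr); congr (_ / _); apply: eq_bigr => w _.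
rewrite (eq_bigr (fun a => (dg w - 1) + 1 * dg a + 0 * dg a ^+ 2 + 0 * dg a ^+ 3)) => [|a _]; last by ring.
rewrite inner_poly; ring.
Qed.

Lemma N2A : N2 e = (1 * (2%:R * mE) + (-2%:R) * Ak 2 + 1 * Ak 3 + 0 * Ak 4 + 2%:R * B1 + 0 * B2 + 0 * Xs + (-2%:R) * Ak 2 + 1 * Ak 3 + 0 * Ak 4 + 0 * B2) / 2%:R.
Proof.
rewrite /N2 (edge_sum_nn e_sym e_irr (fun t => t * t)) -(sum_lin e_sym e_irr); congr (_ / _); apply: eq_bigr => w _.
rewrite (eq_bigr (fun a => (dg w - 1) ^+ 2 + 2%:R * (dg w - 1) * dg a + 1 * dg a ^+ 2 + 0 * dg a ^+ 3)) => [|a _]; last by ring.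
rewrite inner_poly; ring.
Qed.

Lemma N3A : N3 e = ((-1) * (2%:R * mE) + 3%:R * Ak 2 + (-3%:R) * Ak 3 + 1 * Ak 4 + (-6%:R) * B1 + 3%:R * B2 + 0 * Xs + 3%:R * Ak 2 + (-3%:R) * Ak 3 + 1 * Ak 4 + 3%:R * B2) / 2%:R.
Proof.
rewrite /N3 (edge_sum_nn e_sym e_irr (fun t => t * t * t)) -(sum_lin e_sym e_irr); congr (_ / _); apply: eq_bigr => w _.
rewrite (eq_bigr (fun a => (dg w - 1) ^+ 3 + 3%:R * (dg w - 1) ^+ 2 * dg a + 3%:R * (dg w - 1) * dg a ^+ 2 + 1 * dg a ^+ 3)) => [|a _]; last by ring.
rewrite inner_poly; ring.
Qed.

Lemma nsum w : \sum_(a in Nb w) nn [set w; a] = (dg w - 1) * dg w + sj 1 w.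
Proof.
rewrite (eq_bigr (fun a => (dg w - 1) + 1 * dg a + 0 * dg a ^+ 2 + 0 * dg a ^+ 3)) => [|a]; last first.
  by rewrite inNb => ewa; rewrite (nn2 e_sym e_irr) //; ring.
rewrite inner_poly; ring.
Qed.

Lemma SNSA : SNS e = (0 * (2%:R * mE) + 1 * Ak 2 + (-2%:R) * Ak 3 + 1 * Ak 4 + (-2%:R) * B1 + 2%:R * B2 + 1 * Xs + 0 * Ak 2 + 0 * Ak 3 + 0 * Ak 4 + 0 * B2) - N2 e.
Proof.
rewrite /SNS (sum_meet e_sym e_irr (fun A B => nn A * nn B)) -(sum_lin e_sym e_irr); congr (_ - _).
apply: eq_bigr => w _; rewrite -big_distrlr /= nsum; ring.
Qed.

Lemma MCA : MC e = ((-1) * (2%:R * mE) + 0 * Ak 2 + 1 * Ak 3 + 0 * Ak 4 + 0 * B1 + 0 * B2 + 0 * Xs + 1 * Ak 2 + 0 * Ak 3 + 0 * Ak 4 + 0 * B2) - N1 e.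
Proof.
rewrite /MC (sum_meet e_sym e_irr (fun A B => cc A B)) -(sum_lin e_sym e_irr); congr (_ - _); last first.
  by apply: eq_bigr => A _; rewrite cc_diag.
apply: eq_bigr => w _.
rewrite (eq_bigr (fun a => (dg w - 1 + (dg w - 1) * dg w) + 1 * dg a + 0 * dg a ^+ 2 + 0 * dg a ^+ 3)) => [|a aN]; last first.
  rewrite (eq_bigr (fun b => if a == b then dg w + dg a - 1 else dg w)) => [|b bN]; last by rewrite cc_wab.
  by rewrite pair_if //; ring.
rewrite inner_poly; ring.
Qed.

Lemma MCNA : MCN e = (1 * (2%:R * mE) + (-1) * Ak 2 + (-1) * Ak 3 + 1 * Ak 4 + 1 * B1 + 1 * B2 + 0 * Xs + (-2%:R) * Ak 2 + 1 * Ak 3 + 0 * Ak 4 + 0 * B2) - N2 e.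
Proof.
rewrite /MCN (sum_meet e_sym e_irr (fun A B => cc A B * nn A)) -(sum_lin e_sym e_irr); congr (_ - _); last first.
  by apply: eq_bigr => A _; rewrite cc_diag.
apply: eq_bigr => w _.
rewrite (eq_bigr (fun a => ((dg w - 1) ^+ 2 + (dg w - 1) * dg w * (dg w - 1)) + (2%:R * (dg w - 1) + (dg w - 1) * dg w) * dg a + 1 * dg a ^+ 2 + 0 * dg a ^+ 3)) => [|a aN]; last first.
  rewrite (eq_bigr (fun b => if a == b then (dg w + dg a - 1) * (dg w + dg a - 1) else dg w * (dg w + dg a - 1))) => [|b bN]; last first.
    move: (aN); rewrite inNb => ewa.
    by rewrite cc_wab // (nn2 e_sym e_irr) //; case: (a == b).
  by rewrite pair_if //; ring.
rewrite inner_poly; ring.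
Qed.

End Vert.

Section Vert.
Variables (T : finType) (e : rel T).
Hypothesis e_sym : symmetric e.
Hypothesis e_irr : irreflexive e.
Hypothesis notri : forall x y z, e x y -> e y z -> e z x -> False.
Hypothesis noc4 : forall x y z t, e x y -> e y z -> e z t -> e t x -> x != z -> y != t -> False.

Local Notation E := (edges e).
Local Notation nn := (nn e).
Local Notation cc := (cc e).
Local Notation Mt := (@Mt T).
Local Notation Dj := (@Dj T).
Local Notation mE := (mE e).
Local Notation dg := (dg e).
Local Notation Nb := (Nb e).


Local Notation sj := (sj e).
Local Notation Ak := (Ak e).
Local Notation B1 := (B1 e).
Local Notation B2 := (B2 e).
Local Notation Xs := (Xs e).


Local Notation ed := (edeg e).

Lemma ed2 w a : e w a -> ed [set w; a] = dg w + dg a - 2%:R.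
Proof. by move=> ewa; rewrite /edeg (sum2 _ (e_neq e_irr ewa)). Qed.

Lemma bigcap2 (A B : {set T}) : \bigcap_(C in [set A; B]) C = A :&: B.
Proof.
have [->|AB] := eqVneq A B; first by rewrite setUid big_set1 setIid.
by rewrite big_setU1 ?big_set1 // inE.
Qed.

Lemma prod2 (A B : {set T}) (f : {set T} -> rat) : A != B -> \prod_(C in [set A; B]) f C = f A * f B.
Proof. by move=> AB; rewrite big_setU1 ?big_set1 // inE. Qed.

Definition condp (p : {set T} * {set T}) :=
  [&& p.1 \in E, p.2 \in E, p.1 != p.2 & ~~ [disjoint p.1 & p.2]].

Lemma fiber (X Y : {set T}) (g : {set T} * {set T} -> rat) :
  X != Y -> X \in E -> Y \in E -> ~~ [disjoint X & Y] ->
  \sum_(p | condp p && ([set p.1; p.2] == [set X; Y])) g p = g (X, Y) + g (Y, X).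
Proof.
move=> XY XE YE mXY.
rewrite (eq_bigl (fun p => p \in [set (X, Y); (Y, X)])); last first.
  move=> [A B] /=; rewrite /condp /= in_set2 !xpair_eqE.
  apply/idP/idP.
    case/andP => /and4P [AE BE AB mAB] /eqP S.
    have hA : A \in [set X; Y] by rewrite -S set21.
    have hB : B \in [set X; Y] by rewrite -S set22.
    move: hA hB AB; rewrite !in_set2 => /orP [] /eqP -> /orP [] /eqP -> AB.
    - by rewrite eqxx in AB.
    - by rewrite !eqxx.
    - by rewrite !eqxx orbT.
    - by rewrite eqxx in AB.
  case/orP => /andP [/eqP -> /eqP ->]; first by rewrite XE YE XY mXY eqxx.
  by rewrite XE YE (eq_sym Y X) XY disjoint_sym mXY setUC eqxx.
rewrite big_setU1 ?big_set1 //= inE xpair_eqE negb_and XY.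
by [].
Qed.

Lemma EM2_pairs : 2%:R * EM2 e =
  \sum_(A in E) \sum_(B in E) (A != B)%:R * (Mt A B * (ed A * ed B)).
Proof.
have -> : \sum_(A in E) \sum_(B in E) (A != B)%:R * (Mt A B * (ed A * ed B))
   = \sum_(p | condp p) ed p.1 * ed p.2.
  rewrite (eq_bigr (fun A => \sum_(B in E | (A != B) && ~~ [disjoint A & B]) ed A * ed B)); last first.
    move=> A AE; rewrite [RHS]big_mkcondr /=; apply: eq_bigr => B _.
    by rewrite MtE; case: (A != B); case: [disjoint A & B]; rewrite /= ?mul1r ?mul0r.
  rewrite pair_big_dep /=; apply: eq_bigl => p; rewrite /condp.
  by case: (p.1 \in E); case: (p.2 \in E).
rewrite (partition_big (fun p => [set p.1; p.2])
   (fun P : {set {set T}} => (P \subset E) && (#|P| == 2%N) && (\bigcap_(A in P) A != set0))); last first.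
  move=> [A B]; rewrite /condp /= => /and4P [AE BE AB mAB].
  rewrite bigcap2 setI_eq0 mAB cards2 AB /= !andbT.
  by apply/subsetP => C; rewrite in_set2 => /orP [] /eqP ->.
rewrite /EM2 mulr_sumr; apply: eq_bigr => P /andP [/andP [sPE /cards2P [X [Y [XY PE]]]]].
subst P; rewrite bigcap2 setI_eq0 => mXY.
have XE : X \in E by apply: (subsetP sPE); rewrite set21.
have YE : Y \in E by apply: (subsetP sPE); rewrite set22.
rewrite (fiber (fun p => ed p.1 * ed p.2) XY XE YE mXY) /= prod2 //; ring.
Qed.

Lemma edsum w : \sum_(a in Nb w) ed [set w; a] = (dg w - 2%:R) * dg w + sj 1 w.
Proof.
rewrite (eq_bigr (fun a => (dg w - 2%:R) + 1 * dg a + 0 * dg a ^+ 2 + 0 * dg a ^+ 3)) => [|a]; last first.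
  by rewrite inNb => ewa; rewrite ed2 //; ring.
rewrite inner_poly; ring.
Qed.

Lemma ED2A : \sum_(A in E) ed A * ed A = (4%:R * (2%:R * mE) + (-4%:R) * Ak 2 + 1 * Ak 3 + 0 * Ak 4 + 2%:R * B1 + 0 * B2 + 0 * Xs + (-4%:R) * Ak 2 + 1 * Ak 3 + 0 * Ak 4 + 0 * B2) / 2%:R.
Proof.
rewrite (edge_sum e_sym e_irr) -(sum_lin e_sym e_irr); congr (_ / _); apply: eq_bigr => w _.
rewrite (eq_bigr (fun a => (dg w - 2%:R) ^+ 2 + 2%:R * (dg w - 2%:R) * dg a + 1 * dg a ^+ 2 + 0 * dg a ^+ 3)) => [|a]; last first.
  by rewrite inNb => ewa; rewrite ed2 //; ring.
rewrite inner_poly; ring.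
Qed.

Lemma half2 (X D : rat) : X - D / 2%:R - D / 2%:R = X - D.
Proof. by field. Qed.

Lemma EMsum : \sum_w (\sum_(a in Nb w) ed [set w; a]) * (\sum_(b in Nb w) ed [set w; b]) = (0 * (2%:R * mE) + 4%:R * Ak 2 + (-4%:R) * Ak 3 + 1 * Ak 4 + (-4%:R) * B1 + 2%:R * B2 + 1 * Xs + 0 * Ak 2 + 0 * Ak 3 + 0 * Ak 4 + 0 * B2).
Proof.
rewrite -(sum_lin e_sym e_irr); apply: eq_bigr => w _; rewrite edsum; ring.
Qed.

Lemma EM2A2 : 2%:R * EM2 e = (0 * (2%:R * mE) + 4%:R * Ak 2 + (-4%:R) * Ak 3 + 1 * Ak 4 + (-4%:R) * B1 + 2%:R * B2 + 1 * Xs + 0 * Ak 2 + 0 * Ak 3 + 0 * Ak 4 + 0 * B2) - (4%:R * (2%:R * mE) + (-4%:R) * Ak 2 + 1 * Ak 3 + 0 * Ak 4 + 2%:R * B1 + 0 * B2 + 0 * Xs + (-4%:R) * Ak 2 + 1 * Ak 3 + 0 * Ak 4 + 0 * B2).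
Proof.
rewrite EM2_pairs.
rewrite (eq_bigr (fun A => \sum_(B in E) Mt A B * (ed A * ed B) - ed A * ed A)); last first.
  move=> A AE; rewrite (bigD1 A) //= eqxx mul0r add0r.
  rewrite [in RHS](bigD1 A) //= (MtAA e_irr) // mul1r addrAC subrr add0r.
  by apply: eq_bigr => B /andP [_ BA]; rewrite eq_sym BA mul1r.
rewrite sumrB (sum_meet e_sym e_irr (fun A B => ed A * ed B)).
rewrite (eq_bigr (fun w => (\sum_(a in Nb w) ed [set w; a]) * (\sum_(b in Nb w) ed [set w; b]))); last first.
  by move=> w _; rewrite big_distrlr.
rewrite EMsum ED2A; exact: half2.
Qed.

Lemma M2A : M2 e = B1 / 2%:R.
Proof.
rewrite /M2 (edge_sum e_sym e_irr); congr (_ / _); apply: eq_bigr => w _.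
rewrite /sj mulr_sumr; apply: eq_bigr => a; rewrite inNb => ewa.
by rewrite big_setU1 ?big_set1 ?expr1 // inE (e_neq e_irr ewa).
Qed.

End Vert.

Section Step1.
Variables (T : finType) (e : rel T).
Hypothesis e_sym : symmetric e.
Hypothesis e_irr : irreflexive e.
Local Notation E := (edges e).
Local Notation Dj := (@Dj T).

Definition good (f : {ffun 'I_4 -> {set T}}) : bool :=
  [forall i, f i \in E] && [forall i, [forall j, (i != j) ==> [disjoint f i & f j]]].

Lemma good_inj f : good f -> injective f.
Proof.
case/andP => /forallP fE /forallP fD i j fij; apply/eqP; apply/negPn/negP => ij.
have := implyP (forallP (fD i) j) ij; rewrite fij.
by rewrite (negbTE (edge_meet e_irr (fE j))).
Qed.

Lemma count_good : #|[set f | good f]| = (4`! * #|matchings e 4|)%N.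
Proof.
rewrite -sum1dep_card (partition_big (fun f : {ffun 'I_4 -> {set T}} => f @: 'I_4)
   (fun M => M \in matchings e 4)) /=; last first.
  move=> f gf; have finj := good_inj gf; move: gf => /andP [/forallP fE /forallP fD].
  rewrite inE card_imset // card_ord eqxx andbT; apply/andP; split.
    by apply/subsetP => A /imsetP [i _ ->].
  apply/forallP => A; apply/implyP => /imsetP [i _ ->]; apply/forallP => B.
  apply/implyP => /imsetP [j _ ->]; apply/implyP => fij.
  apply: (implyP (forallP (fD i) j)); apply: contraNneq fij => ->; by [].
rewrite mulnC -sum1_card big_distrl /=; apply: eq_bigr => M.
rewrite inE => /andP [/andP [sME /eqP cM] dM]; rewrite mul1n.
have -> : 4`! = #|[set f : {ffun 'I_4 -> {set T}} in ffun_on (mem M) | injectiveb f]|.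
  by rewrite card_inj_ffuns_on card_ord cM ffactnn.
rewrite sum1dep_card.
apply: eq_card => f; rewrite !inE.
apply/andP/andP => [[gf /eqP imf]|[/ffun_onP fM /injectiveP finj]].
  split; last by apply/injectiveP; exact: good_inj.
  by apply/ffun_onP => i; rewrite -imf imset_f.
have fE : forall i, f i \in E by move=> i; apply: (subsetP sME); exact: fM.
split.
  apply/andP; split; first by apply/forallP.
  apply/forallP => i; apply/forallP => j; apply/implyP => ij.
  have := implyP (forallP (implyP (forallP dM (f i)) (fM i)) (f j)) (fM j).
  move/implyP; apply; apply/negP => /eqP /finj ij2; by rewrite ij2 eqxx in ij.
rewrite eqEcard card_imset // card_ord cM leqnn andbT.
by apply/subsetP => A /imsetP [i _ ->].
Qed.

Definition tup4 (p : {set T} * {set T} * {set T} * {set T}) : {ffun 'I_4 -> {set T}} :=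
  [ffun i : 'I_4 => nth set0 [:: p.1.1.1; p.1.1.2; p.1.2; p.2] i].
Definition untup (f : {ffun 'I_4 -> {set T}}) : {set T} * {set T} * {set T} * {set T} :=
  (f (inord 0), f (inord 1), f (inord 2), f (inord 3)).

Lemma tup4K : cancel tup4 untup.
Proof. by case=> [[[a b] c] d]; rewrite /untup !ffunE !inordK. Qed.

Lemma untupK : cancel untup tup4.
Proof.
move=> f; apply/ffunP => i; rewrite ffunE /=.
case: i => [[|[|[|[|k]]]] Hi] //=; congr (f _); apply: val_inj; by rewrite /= inordK.
Qed.

Lemma forall_ord4 (P : pred 'I_4) :
  [forall i, P i] = [&& P (inord 0), P (inord 1), P (inord 2) & P (inord 3)].
Proof.
apply/forallP/and4P => [H|[H0 H1 H2 H3] i]; first by rewrite !H.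
case: i => [[|[|[|[|k]]]] Hi] //.
- by rewrite (_ : Ordinal Hi = inord 0) //; apply: val_inj; rewrite /= inordK.
- by rewrite (_ : Ordinal Hi = inord 1) //; apply: val_inj; rewrite /= inordK.
- by rewrite (_ : Ordinal Hi = inord 2) //; apply: val_inj; rewrite /= inordK.
- by rewrite (_ : Ordinal Hi = inord 3) //; apply: val_inj; rewrite /= inordK.
Qed.

Lemma inord_eq4 (i j : nat) : (i < 4)%N -> (j < 4)%N -> ((inord i : 'I_4) == inord j) = (i == j).
Proof. by move=> Hi Hj; rewrite -val_eqE /= !inordK. Qed.

Lemma good_tup a b c d :
  good (tup4 (a, b, c, d)) =
  [&& a \in E, b \in E, c \in E, d \in E & [&& [disjoint a & b], [disjoint a & c],
     [disjoint a & d], [disjoint b & c], [disjoint b & d] & [disjoint c & d]]].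
Proof.
rewrite /good !forall_ord4 !ffunE !inordK // !inord_eq4 //=.
rewrite (disjoint_sym b a) (disjoint_sym c a) (disjoint_sym d a) (disjoint_sym c b)
  (disjoint_sym d b) (disjoint_sym d c).
case: (a \in E); case: (b \in E); case: (c \in E); case: (d \in E) => //=.
case: [disjoint a & b]; case: [disjoint a & c]; case: [disjoint a & d];
  case: [disjoint b & c]; case: [disjoint b & d]; case: [disjoint c & d]; by [].
Qed.

Lemma X4_full : X4 e = \sum_a \sum_b \sum_c \sum_d ((good (tup4 (a, b, c, d)))%:R : rat).
Proof.
rewrite /X4 big_mkcond; apply: eq_bigr => a _; case aE: (a \in E); last first.
  by rewrite big1 // => b _; rewrite big1 // => c _; rewrite big1 // => d _; rewrite good_tup aE.
rewrite big_mkcond; apply: eq_bigr => b _; case bE: (b \in E); last first.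
  by rewrite big1 // => c _; rewrite big1 // => d _; rewrite good_tup aE bE.
rewrite big_mkcond; apply: eq_bigr => c _; case cE: (c \in E); last first.
  by rewrite big1 // => d _; rewrite good_tup aE bE cE.
rewrite big_mkcond; apply: eq_bigr => d _; case dE: (d \in E); last first.
  by rewrite good_tup aE bE cE dE.
rewrite good_tup aE bE cE dE /= /Dj.
case: [disjoint a & b]; case: [disjoint a & c]; case: [disjoint a & d];
  case: [disjoint b & c]; case: [disjoint b & d]; case: [disjoint c & d];
  by rewrite /= ?mulr0 ?mul0r ?mulr1.
Qed.

Lemma sum_good : (#|[set f | good f]|%:R : rat) = X4 e.
Proof.
rewrite -sum1dep_card natr_sum big_mkcond /=.
rewrite (eq_bigr (fun f => ((good f)%:R : rat))) => [|f _]; last by case: (good f).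
rewrite (reindex tup4) /=; last by exists untup => f _; [apply: tup4K | apply: untupK].
rewrite X4_full.
rewrite (eq_bigr (fun p => ((good (tup4 (p.1.1.1, p.1.1.2, p.1.2, p.2)))%:R : rat))); last by case=> [[[]]].
rewrite -(pair_bigA _ (fun q d => ((good (tup4 (q.1.1, q.1.2, q.2, d)))%:R : rat))) /=.
rewrite -(pair_bigA _ (fun r c => \sum_d ((good (tup4 (r.1, r.2, c, d)))%:R : rat))) /=.
rewrite -(pair_bigA _ (fun a b => \sum_c \sum_d ((good (tup4 (a, b, c, d)))%:R : rat))) /=.
by [].
Qed.

End Step1.

Unset Implicit Arguments.

Theorem theorem2p9 (T : finType) (e : rel T)
  (e_sym : symmetric e) (e_irr : irreflexive e)
  (girth5 : girth_ge e 5) :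
  let m : rat := (nedges e)%:R in
  ((p_match e 4)%:R : rat) =
    m ^+ 4 / 24%:R + m ^+ 3 / 4%:R + 19%:R * m ^+ 2 / 24%:R - 11%:R * m / 4%:R
    + (M1 e) ^+ 2 / 8%:R + m * Fidx e / 3%:R - m ^+ 2 * M1 e / 4%:R
    + m * M2 e + M14 e / 4%:R - 2%:R * M2 e - 5%:R * m * M1 e / 4%:R
    + 7%:R * M1 e / 2%:R - EM2 e - 3%:R * Fidx e / 2%:R.
Proof.
move=> m.
have notri : forall x y z, e x y -> e y z -> e z x -> False.
  move=> x y z exy eyz ezx.
  have := girth5 3; rewrite /has_cycle_of_length => /(_ (conj isT _)) H.
  suff : (5 <= 3)%N by [].
  apply: H; exists [:: x; y; z]; split => //=.
    rewrite !inE !negb_or (e_neq e_irr exy) (e_neq e_irr eyz) andbT /=.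
    by rewrite eq_sym (e_neq e_irr ezx).
  by rewrite exy eyz ezx.
have noc4 : forall x y z t, e x y -> e y z -> e z t -> e t x -> x != z -> y != t -> False.
  move=> x y z t exy eyz ezt etx xz yt.
  have := girth5 4; rewrite /has_cycle_of_length => /(_ (conj isT _)) H.
  suff : (5 <= 4)%N by [].
  apply: H; exists [:: x; y; z; t]; split => //=.
    rewrite !inE !negb_or (e_neq e_irr exy) (e_neq e_irr eyz) (e_neq e_irr ezt) xz yt /=.
    by rewrite eq_sym (e_neq e_irr etx).
  by rewrite exy eyz ezt etx.
have H24 : X4 e = 24%:R * (p_match e 4)%:R.
  by rewrite -(@sum_good _ e) (@count_good _ e e_irr) natrM.
have EM : EM2 e = (2%:R * EM2 e) / 2%:R by field.
rewrite EM (EM2A2 e_sym e_irr) (M2A e_sym e_irr).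
have -> : (p_match e 4)%:R = X4 e / 24%:R by rewrite H24; field.
rewrite (X4_N e_sym e_irr notri noc4) (SNSA e_sym e_irr) (MCA e_sym e_irr notri) (MCNA e_sym e_irr notri).
rewrite (N1A e_sym e_irr) (N2A e_sym e_irr) (N3A e_sym e_irr).
rewrite /m /M1 /Fidx /M14 /mE.
change (M1pow e 2) with (Ak e 2); change (M1pow e 3) with (Ak e 3); change (M1pow e 4) with (Ak e 4).
rewrite /nedges.
by field.
Qed.
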